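(* Let $p\ge 3$ be a prime, $m,k\ge1$ integers, and $t,u\in\mathbb{Z}_p$ with $u\neq0$ and $t^2\equiv u\pmod p$. Let $G$ be the set of all $m\times k$ matrices over $\mathbb{Z}_p$ with the operation $[a_{ij}]*[b_{ij}]=[(t a_{ij}+u b_{ij})\bmod p]$. Then $(G,* )$ is a cancellative AG-groupoid.
   Context: An AG-groupoid is a set with a binary operation satisfying $(a*b)*c=(c*b)*a$ for all $a,b,c$. An element $a$ of an AG-groupoid $G$ is left cancellative if $a*x=a*y$ implies $x=y$, and right cancellative if $x*a=y*a$ implies $x=y$; $G$ is cancellative if every element is both left and right cancellative. *)

(* Defs.v *)
From mathcomp Require Import all_boot all_order all_algebra.
Set Implicit Arguments. Unset Strict Implicit. Unset Printing Implicit Defensive.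
Import GRing.Theory.
Local Open Scope ring_scope.

Definition AG_groupoid (T : Type) (op : T -> T -> T) : Prop :=
  forall a b c : T, op (op a b) c = op (op c b) a.

Definition left_cancellative (T : Type) (op : T -> T -> T) (a : T) : Prop :=
  forall x y : T, op a x = op a y -> x = y.

Definition right_cancellative (T : Type) (op : T -> T -> T) (a : T) : Prop :=
  forall x y : T, op x a = op y a -> x = y.

Definition cancellative (T : Type) (op : T -> T -> T) : Prop :=
  forall a : T, left_cancellative op a /\ right_cancellative op a.

Definition matop (p m k : nat) (t u : 'F_p) (A B : 'M['F_p]_(m, k)) : 'M['F_p]_(m, k) :=
  \matrix_(i < m, j < k) (t * A i j + u * B i j).

(* Main.v *)
Require Import Defs.
From mathcomp Require Import all_boot all_order all_algebra.
Local Open Scope ring_scope.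
Import GRing.Theory.

Theorem mainTheorem7 (p m k : nat) (t u : 'F_p) :
  prime p -> (3 <= p)%N -> (1 <= m)%N -> (1 <= k)%N ->
  u != 0 -> t ^+ 2 = u ->
  AG_groupoid (@matop p m k t u) /\ cancellative (@matop p m k t u).
Proof.
move=> pp _ _ _ u0 tu.
have t0 : t != 0 by apply: contraNneq u0 => t0; rewrite -tu t0 expr2 mul0r.
split.
  move=> a b c; apply/matrixP => i j; rewrite /matop !mxE.
  rewrite !mulrDr !mulrA -expr2 tu [t * u]mulrC.
  by rewrite addrAC [RHS]addrAC [u * c i j + _]addrC.
move=> a; split.
  move=> x y /matrixP H; apply/matrixP => i j; have := H i j.
  rewrite /matop !mxE => /addrI /(mulfI u0) //.
move=> x y /matrixP H; apply/matrixP => i j; have := H i j.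
rewrite /matop !mxE => /addIr /(mulfI t0) //.
Qed.
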